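(* Let $S_X,S_Y$ be finite nonempty action sets, $\varphi:S_X\times S_Y\to\mathbb{R}$, $\lambda\in[0,1)$, and let $(\sigma_X^0,\sigma_X^* )$ be a reactive learning strategy for $X$ with reachable set $\mathcal{M}_X$. Suppose there exists $\psi:S_X\to\mathbb{R}$ such that, with $\Psi(\tau_X)=\mathbb{E}_{s_X\sim\tau_X}[\psi(s_X)]$, the generalized next-round correction condition $$\varphi(\tau_X,s_Y)=\Psi(\tau_X)-\lambda\Psi(\sigma_X^*[\tau_X,s_Y])-(1-\lambda)\Psi(\sigma_X^0)$$ holds for every $\tau_X\in\mathcal{M}_X$ and $s_Y\in S_Y$. Then $(\sigma_X^0,\sigma_X^* )$ is a $(\varphi,\lambda)$-autocratic strategy.
   Context: Two players $X,Y$ play a repeated game with finite action sets $S_X,S_Y$; $\Delta(S)$ denotes the probability distributions on $S$. $\varphi(\tau_X,s_Y)=\mathbb{E}_{s_X\sim\tau_X}[\varphi(s_X,s_Y)]$. Histories: $\mathcal{H}=\bigcup_{T\ge0}(S_X\times S_Y)^T$; behavioral strategies are maps $\sigma:\mathcal{H}\to\Delta(S)$; players independently draw actions each round from their strategies evaluated at the history of realized action pairs, with $\mathbb{E}_{\sigma_X,\sigma_Y}$ the expectation over the resulting play. A strategy $\sigma_X$ is $(\varphi,\lambda)$-autocratic if for every behavioral strategy $\sigma_Y$ of $Y$, $\mathbb{E}_{\sigma_X,\sigma_Y}\big[(1-\lambda)\sum_{t\ge0}\lambda^t\varphi(s_X^t,s_Y^t)\big]=0$. A reactive learning strategy $(\sigma_X^0,\sigma_X^*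 )$, $\sigma_X^0\in\Delta(S_X)$, $\sigma_X^*:\Delta(S_X)\times S_Y\to\Delta(S_X)$, plays $\tau_X^0=\sigma_X^0$ in round $0$ and $\tau_X^{t+1}=\sigma_X^*[\tau_X^t,s_Y^t]$ in round $t+1$, where $s_Y^t$ is $Y$'s realized action in round $t$. Its reachable set $\mathcal{M}_X$ is the smallest subset of $\Delta(S_X)$ containing $\sigma_X^0$ and closed under $\tau_X\mapsto\sigma_X^*[\tau_X,s_Y]$ for every $s_Y\in S_Y$. *)

(* Defs.v *)
From HB Require Import structures.
From mathcomp Require Import all_boot all_order all_algebra.
From mathcomp Require Import all_classical all_reals.
From mathcomp Require Import topology normedtype sequences.
Set Implicit Arguments. Unset Strict Implicit. Unset Printing Implicit Defensive.
Import Order.TTheory GRing.Theory Num.Theory.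
Import numFieldNormedType.Exports.
Local Open Scope classical_set_scope.
Local Open Scope ring_scope.

Section RepeatedGame.
Variable R : realType.

Record dist (S : finType) := Dist {
  pmf :> {ffun S -> R};
  _ : [forall s, 0 <= pmf s] && (\sum_(s : S) pmf s == 1) }.

Variables SX SY : finType.

Definition history := seq (SX * SY).

Definition behav_Y := history -> dist SY.

Definition mix_payoff (phi : SX -> SY -> R) (tau : dist SX) (sY : SY) : R :=
  \sum_(sX : SX) tau sX * phi sX sY.

Definition mix_val (psi : SX -> R) (tau : dist SX) : R :=
  \sum_(sX : SX) tau sX * psi sX.

Section Reactive.
Variable sigma0 : dist SX.
Variable sigmastar : dist SX -> SY -> dist SX.

Inductive reachable : dist SX -> Prop :=
  | reach0 : reachable sigma0
  | reachS tau sY : reachable tau -> reachable (sigmastar tau sY).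

(** Mixed action of X after a history h: tau^0 = sigma0,
    tau^{t+1} = sigmastar tau^t s_Y^t (the reactive learning strategy
    viewed as a behavioral strategy). *)
Definition tauX (h : history) : dist SX :=
  foldl (fun tau p => sigmastar tau p.2) sigma0 h.

(** Probability that the play starts with (pre ++ rest), given that
    it started with pre: product of independent draws each round. *)
Fixpoint hist_prob (sY : behav_Y) (pre rest : history) : R :=
  match rest with
  | [::] => 1
  | p :: r => tauX pre p.1 * sY pre p.2 * hist_prob sY (rcons pre p) r
  end.

Definition exp_stage (phi : SX -> SY -> R) (sY : behav_Y) (t : nat) : R :=
  \sum_(h : t.-tuple (SX * SY)) \sum_(p : SX * SY)
     hist_prob sY [::] (rcons (tval h) p) * phi p.1 p.2.

(** (phi, lambda)-autocratic: for every behavioral strategy of Y,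
    E[(1-lambda) sum_t lambda^t phi(s_X^t, s_Y^t)] = 0, the expectation
    of the discounted sum being the (convergent) series of the
    discounted expected stage payoffs. *)
Definition autocratic (phi : SX -> SY -> R) (lambda : R) : Prop :=
  forall sY : behav_Y,
    series (fun t => (1 - lambda) * lambda ^+ t * exp_stage phi sY t)
      @ \oo --> (0 : R).

End Reactive.
End RepeatedGame.

(* Main.v *)
Require Import Defs.
From HB Require Import structures.
From mathcomp Require Import all_boot all_order all_algebra.
From mathcomp Require Import all_classical all_reals.
From mathcomp Require Import topology normedtype sequences.
Import Order.TTheory GRing.Theory Num.Theory.
Local Open Scope ring_scope.
From mathcomp Require Import ring lra.

Lemma dist_ge0 (R : realType) (S : finType) (d : dist R S) s : 0 <= d s.
Proof. by case: d => f /= /andP[/forallP H _]; exact: H. Qed.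

Lemma dist_sum1 (R : realType) (S : finType) (d : dist R S) : \sum_s d s = 1.
Proof. by case: d => f /= /andP[_ /eqP]. Qed.

Lemma sum_tuple_rcons (R : realType) (T : finType) n (F : seq T -> R) :
  \sum_(h : n.+1.-tuple T) F h = \sum_(h : n.-tuple T) \sum_(p : T) F (rcons h p).
Proof.
rewrite pair_big /=.
pose f (q : n.-tuple T * T) : n.+1.-tuple T := [tuple of rcons q.1 q.2].
rewrite (reindex f) //=.
pose g (t : n.+1.-tuple T) : n.-tuple T * T :=
  ([tuple of belast (thead t) (behead t)], last (thead t) (behead t)).
exists g => [[h p] _ | t _].
- have E : rcons h p = rcons (belast (thead (f (h, p))) (behead (f (h, p))))
                              (last (thead (f (h, p))) (behead (f (h, p)))).
    by rewrite -lastI; have /(congr1 val) := tuple_eta (f (h, p)).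
  case/rcons_inj: E => E1 E2.
  by rewrite /g; congr pair => //; apply: val_inj; rewrite /= -E1.
- apply: val_inj; rewrite /= -lastI.
  by have /(congr1 val) := tuple_eta t.
Qed.

Lemma pair_dist (R : realType) (SX SY : finType) (d1 : dist R SX) (d2 : dist R SY)
  (G : SX -> SY -> R) :
  \sum_(p : SX * SY) d1 p.1 * d2 p.2 * G p.1 p.2 =
  \sum_y d2 y * \sum_x d1 x * G x y.
Proof.
rewrite -(pair_bigA _ (fun x y => d1 x * d2 y * G x y)) exchange_big /=; apply: eq_bigr => y _.
rewrite mulr_sumr; apply: eq_bigr => x _; ring.
Qed.

Lemma pair_dist1 (R : realType) (SX SY : finType) (d1 : dist R SX) (d2 : dist R SY) :
  \sum_(p : SX * SY) d1 p.1 * d2 p.2 = 1.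
Proof.
rewrite -(pair_bigA _ (fun x y => d1 x * d2 y)) /=.
rewrite (eq_bigr (fun x => d1 x)) ?dist_sum1 // => x _.
by rewrite -mulr_sumr dist_sum1 mulr1.
Qed.

Lemma hist_prob_rcons (R : realType) (SX SY : finType) sigma0 sigmastar
  (sY : behav_Y R SX SY) (pre r : history SX SY) (p : SX * SY) :
  hist_prob sigma0 sigmastar sY pre (rcons r p) =
  hist_prob sigma0 sigmastar sY pre r *
   (tauX sigma0 sigmastar (pre ++ r) p.1 * sY (pre ++ r) p.2).
Proof.
elim: r pre => [|q r IH] pre /=; first by rewrite cats0 mulr1 mul1r.
by rewrite IH cat_rcons mulrA.
Qed.

Lemma hist_prob_ge0 (R : realType) (SX SY : finType) sigma0 sigmastar
  (sY : behav_Y R SX SY) (pre r : history SX SY) :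
  0 <= hist_prob sigma0 sigmastar sY pre r.
Proof.
elim: r pre => [|q r IH] pre /=; first exact: ler01.
by rewrite !mulr_ge0 ?dist_ge0.
Qed.

Lemma tauX_rcons (R : realType) (SX SY : finType) (sigma0 : dist R SX) sigmastar
  (h : history SX SY) p :
  tauX sigma0 sigmastar (rcons h p) = sigmastar (tauX sigma0 sigmastar h) p.2.
Proof. by rewrite /tauX -cats1 foldl_cat. Qed.

Lemma reach_tauX (R : realType) (SX SY : finType) (sigma0 : dist R SX) sigmastar
  (h : history SX SY) : reachable sigma0 sigmastar (tauX sigma0 sigmastar h).
Proof.
elim/last_ind: h => [|h p IH]; first exact: reach0.
by rewrite tauX_rcons; apply: reachS.
Qed.

Lemma sum_tuple0 (R : realType) (T : finType) (F : seq T -> R) :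
  \sum_(h : 0.-tuple T) F h = F [::].
Proof.
rewrite (eq_bigr (fun _ => F [::])); last by move=> h _; rewrite tuple0.
by rewrite sumr_const card_tuple expn0.
Qed.

Lemma mix_val_bound (R : realType) (SX : finType) (psi : SX -> R) (d : dist R SX) :
  `|mix_val psi d| <= \sum_s `|psi s|.
Proof.
rewrite /mix_val; apply: le_trans (ler_norm_sum _ _ _) _.
rewrite -[X in _ <= X]mul1r -(@dist_sum1 _ _ d) mulr_suml; apply: ler_sum => s _.
rewrite normrM ger0_norm ?dist_ge0 //; apply: ler_wpM2l; first exact: dist_ge0.
by rewrite (bigD1 s) //= lerDl sumr_ge0.
Qed.

Theorem proposition1 (R : realType) (SX SY : finType)
  (hSX : (0 < #|SX|)%N) (hSY : (0 < #|SY|)%N)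
  (phi : SX -> SY -> R) (lambda : R)
  (hl0 : 0 <= lambda) (hl1 : lambda < 1)
  (sigma0 : dist R SX) (sigmastar : dist R SX -> SY -> dist R SX)
  (psi : SX -> R)
  (hcorr : forall tau, reachable sigma0 sigmastar tau -> forall sY : SY,
      mix_payoff phi tau sY =
        mix_val psi tau - lambda * mix_val psi (sigmastar tau sY)
        - (1 - lambda) * mix_val psi sigma0) :
  autocratic sigma0 sigmastar phi lambda.
Proof.
move=> sY.
set Psi := mix_val psi.
set tau := tauX sigma0 sigmastar.
set hp := hist_prob sigma0 sigmastar sY [::].
pose a n := \sum_(h : n.-tuple (SX * SY)) hp h * Psi (tau h).
set c := Psi sigma0.
have hpr h p : hp (rcons h p) = hp h * (tau h p.1 * sY h p.2).
  by rewrite /hp hist_prob_rcons.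
have taur h p : tau (rcons h p) = sigmastar (tau h) p.2 by rewrite /tau tauX_rcons.
have tot n : \sum_(h : n.-tuple (SX * SY)) hp h = 1.
  elim: n => [|n IH]; first by rewrite sum_tuple0.
  rewrite sum_tuple_rcons -[RHS]IH; apply: eq_bigr => h _.
  under eq_bigr do rewrite hpr.
  by rewrite -mulr_sumr pair_dist1 mulr1.
have S1 (h : history SX SY) : \sum_(p : SX * SY) tau h p.1 * sY h p.2 * Psi (sigmastar (tau h) p.2)
    = \sum_y sY h y * Psi (sigmastar (tau h) y).
  rewrite (@pair_dist _ _ _ _ _ (fun _ y => Psi (sigmastar (tau h) y))).
  by apply: eq_bigr => y _; rewrite -mulr_suml dist_sum1 mul1r.
have aS n : a n.+1 = \sum_(h : n.-tuple (SX * SY)) hp h * \sum_y sY h y * Psi (sigmastar (tau h) y).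
  rewrite /a (@sum_tuple_rcons _ _ _ (fun h => hp h * Psi (tau h))); apply: eq_bigr => h _.
  rewrite -S1 mulr_sumr; apply: eq_bigr => p _; rewrite hpr taur; ring.
have a0 : a 0%N = c by rewrite /a (@sum_tuple0 _ _ (fun h => hp h * Psi (tau h))) /hp /= mul1r.
have stage t : exp_stage sigma0 sigmastar phi sY t = a t - lambda * a t.+1 - (1 - lambda) * c.
  have -> : (1 - lambda) * c = (1 - lambda) * c * \sum_(h : t.-tuple (SX * SY)) hp h.
    by rewrite tot mulr1.
  rewrite aS /a [lambda * _]mulr_sumr [(1 - lambda) * c * _]mulr_sumr -!sumrB /exp_stage -/hp; apply: eq_bigr => h _.
  under eq_bigr do rewrite hpr.
  rewrite (eq_bigr (fun p : SX * SY => hp h * (tau h p.1 * sY h p.2 * phi p.1 p.2)));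
    last by move=> p _; ring.
  rewrite -mulr_sumr pair_dist.
  rewrite (eq_bigr (fun y => sY h y * (Psi (tau h) - lambda * Psi (sigmastar (tau h) y)
                    - (1 - lambda) * c))); last first.
    move=> y _; congr (_ * _); exact: (hcorr (tau h) (reach_tauX _ _ _ sigma0 sigmastar h) y).
  rewrite (eq_bigr (fun y => sY h y * (Psi (tau h) - (1 - lambda) * c)
                  - lambda * (sY h y * Psi (sigmastar (tau h) y)))); last by move=> y _; ring.
  rewrite sumrB -mulr_suml -mulr_sumr dist_sum1 mul1r; ring.
pose u := fun t => (1 - lambda) * lambda ^+ t * exp_stage sigma0 sigmastar phi sY t.
have ser n : series u n = (1 - lambda) * lambda ^+ n * (c - a n).
  elim: n => [|n IH]; first by rewrite /series /= big_geq // a0 subrr mulr0.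
  rewrite seriesSr IH /u stage exprS; ring.
pose M := \sum_s `|psi s|.
have aB n : `|a n| <= M.
  rewrite /a; apply: le_trans (ler_norm_sum _ _ _) _.
  rewrite -[X in _ <= X]mul1r -(tot n) mulr_suml; apply: ler_sum => h _.
  rewrite normrM ger0_norm ?hist_prob_ge0 //; apply: ler_wpM2l; first exact: hist_prob_ge0.
  exact: mix_val_bound.
pose K := (1 - lambda) * (`|c| + M).
have -> : series u = (fun n => (1 - lambda) * lambda ^+ n * (c - a n)).
  by apply: funext => n; rewrite ser.
have hl : `|lambda| < 1 by rewrite ger0_norm.
apply: (@squeeze_cvgr _ _ _ _ (geometric (- K) lambda) (geometric K lambda)).
- have l1 : 0 <= 1 - lambda by rewrite subr_ge0 ltW.
  near=> n; rewrite /geometric /= mulNr -ler_norml.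
  rewrite !normrM (ger0_norm l1) normrX (ger0_norm hl0) /K mulrAC.
  apply: ler_wpM2r; first by rewrite exprn_ge0.
  apply: ler_wpM2l => //.
  by apply: le_trans (ler_normB _ _) _; rewrite lerD2l aB.
- exact: cvg_geometric.
- exact: cvg_geometric.
Unshelve. all: by end_near.
Qed.
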